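(* Let $\mathcal{X}$ be a finite nonempty set of types, $n=(n_x)_{x\in\mathcal{X}}$ nonnegative integers, and $\Phi=(\Phi_{xy})_{x,y\in\mathcal{X}}$ a real matrix with $\Phi_{xy}=\Phi_{yx}$ for all $x,y$. Then: (i) a stable roommate matching exists if and only if $\mathcal{W}_{\mathcal{P}}(n,\Phi)=\mathcal{W}_{\mathcal{B}}(n,n,\Phi/2)$; (ii) every stable roommate matching $\mu$ achieves the maximal aggregate surplus, i.e. $S_R(\mu;\Phi)=\mathcal{W}_{\mathcal{P}}(n,\Phi)$; (iii) whenever $(\mu,u)$ is a stable outcome, the payoff vector $u$ (together with some antisymmetric matrix $A$) is an optimal solution of the program $$\min_{u\in\mathbb{R}^{\mathcal{X}},\,A\in\mathbb{R}^{\mathcal{X}\times\mathcal{X}}}\ \sum_x u_x n_x\quad\text{s.t. } u_x\ge 0,\ \ u_x+u_y\ge \Phi_{xy}+A_{xy},\ \ A_{xy}=-A_{yx}\ \text{ for all } x,y\in\mathcal{X}.$$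
   Context: Roommate matching with transferable utility: $n_x$ is the number of individuals of type $x$; a pair of types $\{x,y\}$ (possibly $x=y$) generates joint surplus $\Phi_{xy}$; singles get utility $0$. Feasible roommate matchings: $\mathcal{P}(n)=\{\mu=(\mu_{xy})_{x,y\in\mathcal{X}}:\ \mu_{xy}\in\mathbb{N},\ \mu_{xy}=\mu_{yx},\ 2\mu_{xx}+\sum_{y\neq x}\mu_{xy}\le n_x\ \forall x\}$. Total surplus $S_R(\mu;\Phi)=\sum_x\mu_{xx}\Phi_{xx}+\sum_{x\neq y}\mu_{xy}\Phi_{xy}/2$, and $\mathcal{W}_{\mathcal{P}}(n,\Phi)=\max_{\mu\in\mathcal{P}(n)}S_R(\mu;\Phi)$. Bipartite problem: $\mathcal{B}(n,n)=\{\nu\in\mathbb{N}^{\mathcal{X}\times\mathcal{X}}:\ \sum_y\nu_{xy}\le n_x\ \forall x,\ \sum_x\nu_{xy}\le n_y\ \forall y\}$ and $\mathcal{W}_{\mathcal{B}}(n,n,\Phi/2)=\max_{\nu\in\mathcal{B}(n,n)}\sum_{x,y}\nu_{xy}\Phi_{xy}/2$. An outcome is a pair $(\mu,u)$ with $\mu\in\mathcal{P}(n)$ and $u=(u_x)\in\mathbb{R}^{\mathcal{X}}$ (payoff of each type-$x$ individual) such that $\sum_x n_xu_x=S_R(\mu;\Phi)$. It is stable if $u_x\ge0$ and $u_x+u_y\ge\Phi_{xy}$ for all $x,y\in\mathcal{X}$. A matching $\mu\in\mathcal{P}(n)$ is a stable roommate matching if there is $u$ with $(\mu,u)$ a stable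 outcome. *)

(* Defs.v *)
From HB Require Import structures.
From mathcomp Require Import all_boot all_order all_algebra.
Set Implicit Arguments. Unset Strict Implicit. Unset Printing Implicit Defensive.
Import Order.TTheory GRing.Theory Num.Theory.
Local Open Scope ring_scope.

Section Roommate.
Variables (R : realFieldType) (X : finType).

Definition roommate_feasible (n : X -> nat) (mu : X -> X -> nat) : bool :=
  [forall x, forall y, mu x y == mu y x] &&
  [forall x, (2 * mu x x + \sum_(y | y != x) mu x y <= n x)%N].

Definition S_R (Phi : X -> X -> R) (mu : X -> X -> nat) : R :=
  \sum_x (mu x x)%:R * Phi x x +
  \sum_x \sum_(y | y != x) (mu x y)%:R * Phi x y / 2.

Definition bipartite_feasible (n : X -> nat) (nu : X -> X -> nat) : bool :=
  [forall x, (\sum_y nu x y <= n x)%N] &&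
  [forall y, (\sum_x nu x y <= n y)%N].

Definition S_B (Phi : X -> X -> R) (nu : X -> X -> nat) : R :=
  \sum_x \sum_y (nu x y)%:R * (Phi x y / 2).

(* any feasible matching has entries <= sum_x n_x, so the following
   finite enumeration covers all of P(n) (resp. B(n,n)); the zero matching
   is feasible with value 0, so 0 is a harmless neutral element for max. *)
Definition nbound (n : X -> nat) : nat := (\sum_x n x)%N.

Definition W_P (n : X -> nat) (Phi : X -> X -> R) : R :=
  \big[Num.max/0]_(m : {ffun X * X -> 'I_(nbound n).+1}
     | roommate_feasible n (fun x y => nat_of_ord (m (x, y))))
     S_R Phi (fun x y => nat_of_ord (m (x, y))).

Definition W_B (n : X -> nat) (Phi : X -> X -> R) : R :=
  \big[Num.max/0]_(m : {ffun X * X -> 'I_(nbound n).+1}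
     | bipartite_feasible n (fun x y => nat_of_ord (m (x, y))))
     S_B Phi (fun x y => nat_of_ord (m (x, y))).

Definition outcome (n : X -> nat) (Phi : X -> X -> R)
    (mu : X -> X -> nat) (u : X -> R) : Prop :=
  roommate_feasible n mu /\ \sum_x (n x)%:R * u x = S_R Phi mu.

Definition stable_outcome (n : X -> nat) (Phi : X -> X -> R)
    (mu : X -> X -> nat) (u : X -> R) : Prop :=
  outcome n Phi mu u /\ (forall x, 0 <= u x) /\
  (forall x y, Phi x y <= u x + u y).

Definition stable_roommate_matching (n : X -> nat) (Phi : X -> X -> R)
    (mu : X -> X -> nat) : Prop :=
  roommate_feasible n mu /\ exists u, stable_outcome n Phi mu u.

Definition dual_feasible (Phi : X -> X -> R) (u : X -> R) (A : X -> X -> R)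
    : Prop :=
  (forall x, 0 <= u x) /\
  (forall x y, Phi x y + A x y <= u x + u y) /\
  (forall x y, A x y = - A y x).

Definition dual_optimal (n : X -> nat) (Phi : X -> X -> R)
    (u : X -> R) (A : X -> X -> R) : Prop :=
  dual_feasible Phi u A /\
  forall u' A', dual_feasible Phi u' A' ->
    \sum_x u x * (n x)%:R <= \sum_x u' x * (n x)%:R.

End Roommate.

(* Main.v *)
Require Import Defs.
From HB Require Import structures.
From mathcomp Require Import all_boot all_order all_algebra all_fingroup.
From mathcomp Require Import zify ring lra.
From Stdlib Require Import FunctionalExtensionality.
Import Order.TTheory GRing.Theory Num.Theory.
Local Open Scope ring_scope.

Module Helpers.
Set Implicit Arguments. Unset Strict Implicit.

Section BigMaxMin.
Variables (R : realFieldType) (A : eqType).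

Lemma bmax_ge (r : seq A) (P : pred A) (F : A -> R) x0 x :
  x \in r -> P x -> F x <= \big[Num.max/x0]_(y <- r | P y) F y.
Proof.
elim: r => // a r IH; rewrite inE big_cons => /orP[/eqP<-|xr] Px.
  by rewrite Px le_max lexx.
case: ifP => _; last exact: IH.
by rewrite le_max IH ?orbT.
Qed.

Lemma bmax_le (r : seq A) (P : pred A) (F : A -> R) x0 b :
  x0 <= b -> (forall x, x \in r -> P x -> F x <= b) ->
  \big[Num.max/x0]_(y <- r | P y) F y <= b.
Proof.
move=> h0; elim: r => [|a r IH] H; first by rewrite big_nil.
have H' : forall x, x \in r -> P x -> F x <= b.
  by move=> x xr; apply: H; rewrite inE xr orbT.
rewrite big_cons; case: ifP => Pa; last exact: IH.
by rewrite ge_max H ?inE ?eqxx //= IH.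
Qed.

Lemma bmax_att (r : seq A) (P : pred A) (F : A -> R) x0 :
  \big[Num.max/x0]_(y <- r | P y) F y = x0 \/
  exists x, [/\ x \in r, P x & \big[Num.max/x0]_(y <- r | P y) F y = F x].
Proof.
elim: r => [|a r IH]; first by left; rewrite big_nil.
rewrite big_cons; case: ifP => Pa.
  rewrite maxEle; case: ifP => _.
    case: IH => [->|[x [xr Px ->]]]; first by left.
    by right; exists x; rewrite inE xr orbT.
  by right; exists a; rewrite inE eqxx.
case: IH => [->|[x [xr Px ->]]]; first by left.
by right; exists x; rewrite inE xr orbT.
Qed.

Lemma bmin_le (r : seq A) (F : A -> R) x0 x :
  x \in r -> \big[Num.min/x0]_(y <- r) F y <= F x.
Proof.
elim: r => // a r IH; rewrite inE big_cons => /orP[/eqP<-|xr].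
  by rewrite ge_min lexx.
by rewrite ge_min IH ?orbT.
Qed.

Lemma bmin_att (r : seq A) (F : A -> R) x0 :
  \big[Num.min/x0]_(y <- r) F y = x0 \/
  exists2 x, x \in r & \big[Num.min/x0]_(y <- r) F y = F x.
Proof.
elim: r => [|a r IH]; first by left; rewrite big_nil.
rewrite big_cons minEle; case: ifP => _.
  by right; exists a; rewrite ?inE ?eqxx.
case: IH => [->|[x xr ->]]; first by left.
by right; exists x; rewrite // inE xr orbT.
Qed.

End BigMaxMin.

Section Walks.
Variables (R : realFieldType) (T : finType) (d : T -> T -> R).

Fixpoint pcost (s : seq T) (k : T) : R :=
  if s is v :: s' then d v (head k s') + pcost s' k else 0.

Lemma pcost_cat s1 s2 k : pcost (s1 ++ s2) k = pcost s1 (head k s2) + pcost s2 k.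
Proof.
elim: s1 => [|v s1 IH] /=; first by rewrite add0r.
rewrite IH addrA; congr (d v _ + _ + _); by case: s1 {IH}.
Qed.

Lemma pcost_rcons s i k : pcost (rcons s i) k = pcost s i + d i k.
Proof. by rewrite -cats1 pcost_cat /= addr0. Qed.

Lemma pcost_split l1 w l2 l3 k :
  pcost (l1 ++ w :: l2 ++ w :: l3) k = pcost (w :: l2) w + pcost (l1 ++ w :: l3) k.
Proof.
rewrite pcost_cat [in RHS]pcost_cat /=.
have -> : head k (l2 ++ w :: l3) = head w l2 by case: l2.
rewrite pcost_cat /=; ring.
Qed.

Lemma not_uniq_split (s : seq T) : ~~ uniq s ->
  exists l1 w l2 l3, s = l1 ++ w :: l2 ++ w :: l3.
Proof.
elim: s => // v s IH /=; rewrite negb_and negbK => /orP[vs|us].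
  case/splitPr: vs => p1 p2; by exists [::], v, p1, p2.
case: (IH us) => l1 [w [l2 [l3 ->]]]; by exists (v :: l1), w, l2, l3.
Qed.

Lemma pcost_nth v l k :
  pcost (v :: l) k = \sum_(j < (size l).+1) d (nth k (v :: l) j) (nth k l j).
Proof.
elim: l v => [|u l IH] v; first by rewrite big_ord1 /= addr0.
rewrite (_ : pcost (v :: u :: l) k = d v u + pcost (u :: l) k) // IH.
by rewrite [in RHS]big_ord_recl.
Qed.

Hypothesis Hd0 : forall i, d i i = 0.
Hypothesis Hperm : forall t : {perm T}, 0 <= \sum_i d i (t i).

Lemma cycle_nonneg v l : uniq (v :: l) -> 0 <= pcost (v :: l) v.
Proof.
move=> Uc; set c := v :: l.
pose t := perm (can_inj (prev_next Uc)).
have := Hperm t.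
have -> : \sum_i d i (t i) = \sum_(i <- c) d i (next c i).
  rewrite [RHS]big_uniq // (bigID (mem c)) /= [X in _ + X]big1 ?addr0.
    by apply: eq_bigr => i _; rewrite permE.
  by move=> i /negbTE ic; rewrite permE next_nth ic Hd0.
rewrite (big_nth v) big_mkord pcost_nth.
have -> : size c = (size l).+1 by [].
suff -> : \sum_(j < (size l).+1) d (nth v c j) (next c (nth v c j)) =
  \sum_(j < (size l).+1) d (nth v (v :: l) j) (nth v l j) by [].
apply: eq_bigr => j _; congr (d _ _).
rewrite next_nth mem_nth // /c index_uniq //.
Qed.

Lemma closed_nonneg v l : 0 <= pcost (v :: l) v.
Proof.
have [m Hm] := ubnP (size l); elim: m v l Hm => // m IH v l Hl.
case Uc: (uniq (v :: l)); first exact: cycle_nonneg.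
case: (not_uniq_split (negbT Uc)) => l1 [w [l2 [l3 E]]].
have Hs : size (v :: l) = size (l1 ++ w :: l2 ++ w :: l3) by rewrite E.
rewrite /= size_cat /= size_cat /= in Hs.
rewrite E pcost_split; apply: addr_ge0.
  apply: IH; lia.
case: l1 E Hs => [|u l1] /= [<- El] Hs; first by apply: IH; lia.
by apply: IH; rewrite size_cat /=; lia.
Qed.

Fixpoint allw (m : nat) : seq (seq T) :=
  if m is m'.+1 then [::] :: [seq x :: s | x <- enum T, s <- allw m']
  else [:: [::]].

Lemma mem_allw m s : (s \in allw m) = (size s <= m)%N.
Proof.
elim: m s => [|m IH] [|x s] //=.
rewrite inE /=; apply/allpairsP/idP => [[[y s'] [_ /= Hs [_ ->]]]|Hs].
  by rewrite ltnS -IH.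
by exists (x, s); rewrite mem_enum IH -ltnS.
Qed.

Definition pot (k : T) : R := \big[Num.min/0]_(s <- allw #|T|) pcost s k.

Lemma pot_le s k : (size s <= #|T|)%N -> pot k <= pcost s k.
Proof. by move=> Hs; apply: bmin_le; rewrite mem_allw. Qed.

Lemma pot_att k : exists2 s, (size s <= #|T|)%N & pot k = pcost s k.
Proof.
rewrite /pot; case: (bmin_att (allw #|T|) (pcost^~ k) 0) => [->|[s]].
  by exists [::].
by rewrite mem_allw => Hs E; exists s.
Qed.

Lemma pot_tri i k : pot k <= pot i + d i k.
Proof.
case: (pot_att i) => s Hs ->; rewrite -pcost_rcons.
case: (leqP (size (rcons s i)) #|T|) => Hs'; first exact: pot_le.
have Hn : ~~ uniq (rcons s i).
  apply/negP => /card_uniqP Hc; have := max_card (mem (rcons s i)).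
  by rewrite Hc; lia.
case: (not_uniq_split Hn) => l1 [w [l2 [l3 E]]].
have Hz : size (rcons s i) = size (l1 ++ w :: l2 ++ w :: l3) by rewrite E.
rewrite size_rcons size_cat /= size_cat /= in Hz Hs'.
rewrite E pcost_split.
have H1 : (size (l1 ++ w :: l3) <= #|T|)%N.
  rewrite size_cat /=; apply: leq_trans Hs; lia.
have H2 := pot_le k H1.
have H3 := closed_nonneg w l2.
lra.
Qed.

End Walks.

Section Main.
Variables (R : realFieldType) (X : finType) (n : X -> nat) (Phi : X -> X -> R).
Hypothesis hPhi : forall x y, Phi x y = Phi y x.

Lemma le_nbound x : (n x <= nbound n)%N.
Proof. by rewrite /nbound (bigD1 x) //= leq_addr. Qed.

Lemma rf_sym mu : roommate_feasible n mu -> forall x y, mu x y = mu y x.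
Proof. by case/andP=> /forallP H _ x y; move/forallP: (H x) => /(_ y) /eqP. Qed.

Lemma rf_row mu : roommate_feasible n mu ->
  forall x, (2 * mu x x + \sum_(y | y != x) mu x y <= n x)%N.
Proof. by case/andP=> _ /forallP H. Qed.

Lemma rf_bound mu : roommate_feasible n mu -> forall x y, (mu x y <= nbound n)%N.
Proof.
move=> H x y; apply: leq_trans (le_nbound x); have := rf_row H x.
case: (eqVneq y x) => [->|yx]; first lia.
rewrite (bigD1 y) //=; lia.
Qed.

Lemma bf_row nu : bipartite_feasible n nu -> forall x, (\sum_y nu x y <= n x)%N.
Proof. by case/andP=> /forallP H _. Qed.
Lemma bf_col nu : bipartite_feasible n nu -> forall y, (\sum_x nu x y <= n y)%N.
Proof. by case/andP=> _ /forallP H. Qed.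

Lemma bf_bound nu : bipartite_feasible n nu -> forall x y, (nu x y <= nbound n)%N.
Proof.
move=> H x y; apply: leq_trans (le_nbound x); apply: leq_trans (bf_row H x).
by rewrite (bigD1 y) //= leq_addr.
Qed.

Definition toff (mu : X -> X -> nat) : {ffun X * X -> 'I_(nbound n).+1} :=
  [ffun p => inord (mu p.1 p.2)].

Lemma toffK mu : (forall x y, (mu x y <= nbound n)%N) ->
  (fun x y => nat_of_ord (toff mu (x, y))) = mu.
Proof.
move=> H; apply: functional_extensionality => x; apply: functional_extensionality => y.
by rewrite ffunE /= inordK // ltnS.
Qed.

Lemma SR_le_WP mu : roommate_feasible n mu -> S_R Phi mu <= W_P n Phi.
Proof.
move=> H; have E := toffK (rf_bound H).
rewrite /W_P; have := bmax_ge (r := index_enum _) (P :=   (fun m : {ffun X * X -> 'I_(nbound n).+1} =>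
     roommate_feasible n (fun x y => nat_of_ord (m (x, y)))))
  (fun m => S_R Phi (fun x y => nat_of_ord (m (x, y)))) 0 (x := toff mu).
by rewrite E; apply; rewrite ?mem_index_enum.
Qed.

Lemma SB_le_WB nu : bipartite_feasible n nu -> S_B Phi nu <= W_B n Phi.
Proof.
move=> H; have E := toffK (bf_bound H).
rewrite /W_B; have := bmax_ge (r := index_enum _) (P :=   (fun m : {ffun X * X -> 'I_(nbound n).+1} =>
     bipartite_feasible n (fun x y => nat_of_ord (m (x, y)))))
  (fun m => S_B Phi (fun x y => nat_of_ord (m (x, y)))) 0 (x := toff nu).
by rewrite E; apply; rewrite ?mem_index_enum.
Qed.

Lemma WB_le b : 0 <= b -> (forall nu, bipartite_feasible n nu -> S_B Phi nu <= b) ->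
  W_B n Phi <= b.
Proof.
move=> b0 H; rewrite /W_B; apply: bmax_le => // m _ Hm; exact: H.
Qed.

Lemma WP_att : exists mu, roommate_feasible n mu /\ W_P n Phi = S_R Phi mu.
Proof.
rewrite /W_P.
case: (bmax_att (index_enum {ffun X * X -> 'I_(nbound n).+1}) (fun m =>
     roommate_feasible n (fun x y => nat_of_ord (m (x, y))))
  (fun m => S_R Phi (fun x y => nat_of_ord (m (x, y)))) 0) => [->|[m [_ Hm ->]]]; last by exists (fun x y => nat_of_ord (m (x, y))).
exists (fun _ _ => 0%N); split.
  apply/andP; split; apply/forallP => x //; first by apply/forallP.
  by rewrite big1.
by rewrite /S_R !big1 ?addr0 // => x _; rewrite ?mul0r // big1 // => y _; rewrite !mul0r.
Qed.

Lemma WB_ge0 : 0 <= W_B n Phi.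
Proof.
apply: le_trans (SB_le_WB (nu := fun _ _ => 0%N) _).
  by rewrite /S_B big1 // => x _; rewrite big1 // => y _; rewrite mul0r.
by apply/andP; split; apply/forallP => x; rewrite big1.
Qed.

Lemma offswap (F : X -> X -> R) :
  \sum_x \sum_(y | y != x) F x y = \sum_x \sum_(y | y != x) F y x.
Proof.
rewrite (exchange_big_dep predT) //=; apply: eq_bigr => x _.
by apply: eq_bigl => y; rewrite eq_sym.
Qed.

Lemma WP_le_WB : W_P n Phi <= W_B n Phi.
Proof.
rewrite /W_P; apply: bmax_le; first exact: WB_ge0.
move=> m _; set mu := (fun x y => nat_of_ord (m (x, y))) => Hm.
pose nu x y := if x == y then (2 * mu x x)%N else mu x y.
have Hrow : forall x, (\sum_y nu x y = 2 * mu x x + \sum_(y | y != x) mu x y)%N.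
  move=> x; rewrite (bigD1 x) //= /nu /= eqxx; congr (_ + _)%N.
  by apply: eq_bigr => y yx; rewrite eq_sym (negbTE yx).
have Hcol : forall y, (\sum_x nu x y = 2 * mu y y + \sum_(x | x != y) mu y x)%N.
  move=> y; rewrite (bigD1 y) //= /nu /= eqxx; congr (_ + _)%N.
  by apply: eq_bigr => x xy; rewrite (negbTE xy) (rf_sym Hm).
have Hf : bipartite_feasible n nu.
  apply/andP; split; apply/forallP => x; rewrite ?Hrow ?Hcol; exact: rf_row.
apply: le_trans (SB_le_WB Hf); rewrite le_eqVlt; apply/orP; left; apply/eqP.
rewrite /S_R /S_B -big_split; apply: eq_bigr => x _ /=.
rewrite [RHS](bigD1 x) //= /nu /= eqxx; congr (_ + _).
  by rewrite natrM; field.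
by apply: eq_bigr => y yx; rewrite eq_sym (negbTE yx) mulrA.
Qed.

Lemma weak_dual mu u A : roommate_feasible n mu -> dual_feasible Phi u A ->
  S_R Phi mu <= \sum_x u x * (n x)%:R.
Proof.
move=> Hm [Hu [HP HA]]; have Sym := rf_sym Hm.
have A0 : forall x, A x x = 0 by move=> x; have := HA x x; lra.
pose G x y := (mu x y)%:R * (u x + u y - A x y) / 2.
pose H x y := (mu x y)%:R * u x.
have e1 : \sum_x \sum_(y | y != x) (G x y + G y x) =
          \sum_x \sum_(y | y != x) (H x y + H y x).
  apply: eq_bigr => x _; apply: eq_bigr => y _.
  by rewrite /G /H (Sym y x) (HA y x); field.
have spl : forall F1 F2 : X -> X -> R,
    \sum_x \sum_(y | y != x) (F1 x y + F2 x y) =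
    \sum_x \sum_(y | y != x) F1 x y + \sum_x \sum_(y | y != x) F2 x y.
  by move=> F1 F2; rewrite -big_split; apply: eq_bigr => z _; rewrite big_split.
rewrite !spl in e1; have oG := offswap G; have oH := offswap H.
have eG : \sum_x \sum_(y | y != x) G x y = \sum_x \sum_(y | y != x) H x y by lra.
have s1 : \sum_x \sum_(y | y != x) (mu x y)%:R * Phi x y / 2 <=
          \sum_x \sum_(y | y != x) G x y.
  apply: ler_sum => x _; apply: ler_sum => y _; rewrite /G -!mulrA.
  apply: ler_wpM2l; first exact: ler0n.
  rewrite ler_pM2r ?invr_gt0 ?ltr0n //; have := HP x y; lra.
have s2 : \sum_x (mu x x)%:R * Phi x x <= \sum_x (mu x x)%:R * (2 * u x).
  apply: ler_sum => x _; apply: ler_wpM2l; first exact: ler0n.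
  have := HP x x; rewrite A0; lra.
apply: le_trans (lerD s2 s1) _; rewrite eG -big_split /=.
apply: ler_sum => x _.
have -> : (mu x x)%:R * (2 * u x) + \sum_(y | y != x) H x y =
    u x * (2 * mu x x + \sum_(y | y != x) mu x y)%:R.
  rewrite natrD natrM natr_sum mulrDr mulr_sumr /H; congr (_ + _); first ring.
  by apply: eq_bigr => y _; rewrite mulrC.
by apply: ler_wpM2l; [exact: Hu | rewrite ler_nat; exact: rf_row].
Qed.

Lemma SB_le_dual nu u : bipartite_feasible n nu -> (forall x, 0 <= u x) ->
  (forall x y, Phi x y <= u x + u y) -> S_B Phi nu <= \sum_x (n x)%:R * u x.
Proof.
move=> Hn Hu HP.
have h1 : \sum_x \sum_y (nu x y)%:R * u x <= \sum_x (n x)%:R * u x.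
  apply: ler_sum => x _; rewrite -mulr_suml -natr_sum.
  by apply: ler_wpM2r => //; rewrite ler_nat; exact: bf_row.
have h2 : \sum_x \sum_y (nu x y)%:R * u y <= \sum_x (n x)%:R * u x.
  rewrite exchange_big; apply: ler_sum => y _; rewrite -mulr_suml -natr_sum.
  by apply: ler_wpM2r => //; rewrite ler_nat; exact: bf_col.
have h0 : S_B Phi nu <= (\sum_x \sum_y (nu x y)%:R * u x) / 2 +
                        (\sum_x \sum_y (nu x y)%:R * u y) / 2.
  rewrite !mulr_suml -big_split; apply: ler_sum => x _.
  rewrite !mulr_suml -big_split; apply: ler_sum => y _.
  have := HP x y; have : 0 <= (nu x y)%:R :> R by exact: ler0n.
  move=> h0 h.
  apply: le_trans (_ : _ <= (nu x y)%:R * ((u x + u y) / 2)) _.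
    by apply: ler_wpM2l => //; lra.
  rewrite le_eqVlt; apply/orP; left; apply/eqP.
  apply: (@eq_trans _ _ ((nu x y)%:R * u x / 2 + (nu x y)%:R * u y / 2)) => //; ring.
lra.
Qed.

End Main.

Section Assign.
Variables (R : realFieldType) (X : finType) (n : X -> nat) (Phi : X -> X -> R).
Hypothesis hPhi : forall x y, Phi x y = Phi y x.

Definition Ityp := {x : X & 'I_(n x)}.

Lemma cnt x : (\sum_(i : Ityp) (tag i == x) = n x)%N.
Proof.
have := sig_big_dep (op := addn) (idx := 0%N) (fun x' => x' == x) (fun x' (k : 'I_(n x')) => true)
   (fun x' (k : 'I_(n x')) => 1%N).
rewrite big_pred1_eq sum1_card card_ord => ->.
rewrite [RHS]big_mkcond /=; apply: eq_bigr => i _; rewrite andbT; by case: (tag i == x).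
Qed.

Lemma sum_tag (F : Ityp -> R) :
  \sum_x \sum_(k : 'I_(n x)) F (Tagged (fun x => 'I_(n x)) k) = \sum_i F i.
Proof.
have := sig_big_dep (op := +%R) (idx := 0 : R) (fun x' => true) (fun x' (k : 'I_(n x')) => true)
   (fun x' (k : 'I_(n x')) => F (Tagged (fun x => 'I_(n x)) k)).
move=> ->; apply: eq_bigr => [[x k]] _ //.
Qed.

Lemma single_le (T : finType) (F : T -> R) j : (forall i, 0 <= F i) -> F j <= \sum_i F i.
Proof. by move=> H; rewrite (bigD1 j) //= lerDl sumr_ge0. Qed.

Lemma dual_exists : exists w : X -> R, (forall x, 0 <= w x) /\
  (forall x y, Phi x y <= w x + w y) /\ \sum_x w x * (n x)%:R <= W_B n Phi.
Proof.
pose C (i j : Ityp) := Num.max (Phi (tag i) (tag j)) 0 / 2.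
have C0 : forall i j, 0 <= C i j.
  by move=> i j; rewrite /C divr_ge0 // le_max lexx orbT.
pose F (s : {perm Ityp}) := \sum_i C i (s i).
have [sg Hsg] : exists sg : {perm Ityp}, forall t, F t <= F sg.
  case: (bmax_att (index_enum {perm Ityp}) predT F (F 1%g)) => [E|[s [_ _ E]]].
    exists 1%g => t; rewrite -E; exact: bmax_ge (mem_index_enum _) _.
  exists s => t; rewrite -E; exact: bmax_ge (mem_index_enum _) _.
pose dd i k := C i (sg i) - C i (sg k).
have Hd0 : forall i, dd i i = 0 by move=> i; rewrite /dd subrr.
have Hperm : forall t : {perm Ityp}, 0 <= \sum_i dd i (t i).
  move=> t; rewrite /dd sumrB subr_ge0.
  have := Hsg (t * sg)%g; rewrite /F.
  by under eq_bigr => i _ do rewrite permM.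
pose p := pot dd.
have Htri := pot_tri Hd0 Hperm.
pose a i := C i (sg i) + p i.
pose b j := - p ((sg^-1)%g j).
have Hab : forall i j, C i j <= a i + b j.
  move=> i j; have := Htri i ((sg^-1)%g j); rewrite /a /b /dd permKV -/p; lra.
pose e i := a i + b i.
have e0 : forall i, 0 <= e i by move=> i; apply: le_trans (C0 i i) (Hab i i).
have esum : \sum_i e i = F sg.
  rewrite /e /a /b big_split /= big_split /= sumrN /F.
  rewrite [X in _ + _ - X](reindex_inj (@perm_inj _ sg)) /=.
  under [X in _ + _ - X]eq_bigr => i _ do rewrite permK.
  by rewrite addrK.
pose M := \sum_x \sum_y `|Phi x y|.
have M0 : 0 <= M by apply: sumr_ge0 => x _; apply: sumr_ge0 => y _.
have MP : forall x y, Phi x y <= M.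
  move=> x y; have h1 := ler_norm (Phi x y).
  have h2 := @single_le _ (fun y => `|Phi x y|) y (fun y => normr_ge0 _).
  have h3 := @single_le _ (fun x => \sum_y `|Phi x y|) x
     (fun x => sumr_ge0 _ (fun y _ => normr_ge0 (Phi x y))).
  rewrite /M; simpl in h2, h3; lra.
pose w x := \big[Num.min/M]_(k <- enum 'I_(n x)) e (Tagged (fun x => 'I_(n x)) k).
have hw1 : forall x (k : 'I_(n x)), w x <= e (Tagged (fun x => 'I_(n x)) k).
  move=> x k; rewrite /w.
  have hk : k \in enum 'I_(n x) by rewrite mem_enum.
  exact: (bmin_le (fun k => e (Tagged (fun x => 'I_(n x)) k)) M hk).
have hw2 : forall x, w x = M \/ exists k : 'I_(n x), w x = e (Tagged (fun x => 'I_(n x)) k).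
  move=> x; rewrite /w.
  case: (bmin_att (enum 'I_(n x)) (fun k => e (Tagged (fun x => 'I_(n x)) k)) M) => [->|[k _ ->]].
    by left.
  by right; exists k.
have w0 : forall x, 0 <= w x.
  by move=> x; case: (hw2 x) => [->|[k ->]].
exists w; split => //; split.
  move=> x y; case: (hw2 x) => [->|[k ->]].
    by have := MP x y; have := w0 y; lra.
  case: (hw2 y) => [->|[l ->]].
    by have := MP x y; have := e0 (Tagged (fun x => 'I_(n x)) k); lra.
  have h1 := Hab (Tagged (fun x => 'I_(n x)) k) (Tagged (fun x => 'I_(n x)) l).
  have h2 := Hab (Tagged (fun x => 'I_(n x)) l) (Tagged (fun x => 'I_(n x)) k).
  rewrite /C /= in h1 h2; rewrite (hPhi y x) in h2.
  have h3 : Phi x y <= Num.max (Phi x y) 0 by rewrite le_max lexx.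
  rewrite /e; lra.
apply: le_trans (_ : _ <= F sg) _.
  rewrite -esum -sum_tag; apply: ler_sum => x _.
  have -> : w x * (n x)%:R = \sum_(k : 'I_(n x)) w x.
    by rewrite sumr_const card_ord mulr_natr.
  by apply: ler_sum => k _; apply: hw1.
pose nu x y := (\sum_(i : Ityp | tag i == x) ((tag (sg i) == y) && (0 < Phi x y)%R))%N.
have one : forall i (c : X -> bool), (\sum_y ((tag (sg i) == y) && c y) <= 1)%N.
  move=> i c; rewrite (bigD1 (tag (sg i))) //= eqxx big1 ?addn0; first by case: (c _).
  by move=> y yne; rewrite eq_sym (negbTE yne).
have Hf : bipartite_feasible n nu.
  apply/andP; split; apply/forallP => x.
    rewrite /nu exchange_big /= -cnt big_mkcond /=; apply: leq_sum => i _.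
    by case: (tag i == x) => //; exact: one.
  rewrite /nu.
  have -> : (\sum_x' \sum_(i | tag i == x') ((tag (sg i) == x) && (0 < Phi x' x)%R) =
             \sum_i ((tag (sg i) == x) && (0 < Phi (tag i) x)%R))%N.
    rewrite [RHS](partition_big (fun i : Ityp => tag i) predT) //=.
    apply: eq_bigr => x' _; apply: eq_bigr => i Hi; by rewrite (eqP Hi).
  apply: leq_trans (_ : _ <= \sum_i (tag (sg i) == x))%N _.
    by apply: leq_sum => i _; case: (tag (sg i) == x) => //=; exact: leq_b1.
  by rewrite -cnt [X in (_ <= X)%N](reindex_inj (@perm_inj _ sg)).
have HW := SB_le_WB Phi Hf.
suff -> : F sg = S_B Phi nu by [].
rewrite /S_B /nu /F.
have -> : \sum_x \sum_y
    (\sum_(i | tag i == x) ((tag (sg i) == y) && (0 < Phi x y)%R))%N%:R * (Phi x y / 2) =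
  \sum_x \sum_(i | tag i == x) \sum_y
    ((tag (sg i) == y) && (0 < Phi (tag i) y))%:R * (Phi (tag i) y / 2).
  apply: eq_bigr => x _; rewrite exchange_big /=.
  apply: eq_bigr => y _; rewrite natr_sum mulr_suml.
  by apply: eq_bigr => i Hi; rewrite (eqP Hi).
have part : forall G : Ityp -> R, \sum_x \sum_(i | tag i == x) G i = \sum_i G i.
  by move=> G; rewrite [RHS](partition_big (fun i : Ityp => tag i) predT).
rewrite part; apply: eq_bigr => i _.
rewrite (bigD1 (tag (sg i))) //= eqxx /= big1 ?addr0; last first.
  by move=> y yne; rewrite eq_sym (negbTE yne) /= mul0r.
rewrite /C maxEle; case: (leP (Phi (tag i) (tag (sg i))) 0) => h2;
  case: (ltP 0 (Phi (tag i) (tag (sg i)))) => h /=; rewrite ?mul1r ?mul0r; lra.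
Qed.
End Assign.
End Helpers.
Import Helpers.

Theorem theorem2 (R : realFieldType) (X : finType) (hX : (0 < #|X|)%N)
  (n : X -> nat) (Phi : X -> X -> R)
  (hPhi : forall x y, Phi x y = Phi y x) :
  ((exists mu, stable_roommate_matching n Phi mu) <-> W_P n Phi = W_B n Phi)
  /\ (forall mu, stable_roommate_matching n Phi mu -> S_R Phi mu = W_P n Phi)
  /\ (forall mu u, stable_outcome n Phi mu u ->
        exists A, dual_optimal n Phi u A).
Proof.
have swap : forall u : X -> R,
    \sum_x (n x)%:R * u x = \sum_x u x * (n x)%:R.
  by move=> u; apply: eq_bigr => x _; rewrite mulrC.
have main1 : forall mu, stable_roommate_matching n Phi mu ->
    S_R Phi mu = W_P n Phi /\ W_P n Phi = W_B n Phi.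
  move=> mu [Hm [u [[_ Hout] [Hu HP]]]].
  have h1 := SR_le_WP Phi Hm.
  have h2 := WP_le_WB n Phi.
  have h3 : W_B n Phi <= \sum_x (n x)%:R * u x.
    apply: WB_le.
      by apply: sumr_ge0 => x _; apply: mulr_ge0; [exact: ler0n | exact: Hu].
    by move=> nu Hnu; exact: SB_le_dual Hnu Hu HP.
  rewrite Hout in h3; split; lra.
split; [split|split].
- by case=> mu /main1 [].
- move=> E.
  have [w [w0 [wP wS]]] := @dual_exists R X n Phi hPhi.
  case: (WP_att n Phi) => mu [Hm Emu].
  have Hd : dual_feasible Phi w (fun _ _ => 0).
    split => //; split => x y; rewrite ?addr0 ?oppr0 //.
  have wd := weak_dual Hm Hd.
  exists mu; split => //; exists w; split; last by split.
  split => //; rewrite swap; lra.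
- by move=> mu /main1 [].
- move=> mu u [[Hm Hout] [Hu HP]]; exists (fun _ _ => 0); split.
    split => //; split => x y; rewrite ?addr0 ?oppr0 //.
  move=> u' A' Hd; have := weak_dual Hm Hd.
  rewrite -(swap u) Hout; lra.
Qed.
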